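(* Let $k\ge 2$, let $R\subset\mathbb{N}^k$ be a simple and closed region (in the sense of the context), with boundary $B$. For every $y\in B$ and $i\in\{1,\dots,k\}$ define $\hat p_i(y)=k_i^{\ast}(y)/k(y)$. Then for each $i$, $\hat p_i$ is the unique bounded unbiased estimator of $p_i$; that is, if $U:B\to\mathbb{R}$ is bounded and satisfies $\sum_{y\in B}U(y)\,\mathbb{P}_p(y)=p_i$ for every parameter vector $p=(p_1,\dots,p_k)$ with all $p_j>0$ and $\sum_j p_j=1$, then $U(y)=\hat p_i(y)$ for every $y\in B$.
   Context: A repeated independent experiment has $k$ possible outcomes with probabilities $p_1,\dots,p_k$ ($p_j>0$, $\sum_j p_j=1$). Let $X_n=(x_n^1,\dots,x_n^k)$, where $x_n^i\in\mathbb{N}$ counts the occurrences of outcome $i$ among the first $n$ repetitions; thus $X_0=0$ and each step adds a standard unit vector $e_i$ with probability $p_i$. Let $S_n\subset\mathbb{R}^k$ be the set of points with nonnegative coordinates summing to $n$, and $S_n^{\mathbb{N}}=S_n\cap\mathbb{N}^k$. Given a region $R\subset\mathbb{N}^k$ (the accessible region, containing the origin), its boundary $B$ is the set of points not in $R$ that can be reached in one step (by adding some $e_i$) from a point of $R$. The process is observed until it first reaches $B$. For $y=(y_1,\dots,y_k)\in B$, $k(y)$ is the number of lattice paths (with unit steps $e_i$) from the origin to $y$ all of whose points other than $y$ lie in $R$, and $k_i^{\ast}(y)$ is the number of such paths that start instead at the point $e_i$ (the point with $i$-th coordinate $1$ and others $0$). The probability that the first hitting of $B$ occurs at $y$ is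 $\mathbb{P}_p(y)=k(y)\,p_1^{y_1}\cdots p_k^{y_k}$. $R$ is closed if $\sum_{y\in B}\mathbb{P}_p(y)=1$. Setting $R_n=R\cap S_n^{\mathbb{N}}$ (accessible points of order $n$), the points of $S_n^{\mathbb{N}}\setminus R_n$ are called inaccessible and $B_n=B\cap S_n^{\mathbb{N}}$ are the boundary points of order $n$. $R$ is simple if for every $n$ the convex hull of $R_n$ in $\mathbb{R}^k$ contains no inaccessible point of order $n$. *)

(* Defs.v *)
From HB Require Import structures.
From mathcomp Require Import all_boot all_order all_algebra.
From mathcomp Require Import all_classical all_reals all_analysis.
Set Implicit Arguments. Unset Strict Implicit. Unset Printing Implicit Defensive.
Import Order.TTheory GRing.Theory Num.Theory.
Import numFieldNormedType.Exports.
Local Open Scope classical_set_scope.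
Local Open Scope ring_scope.

Definition pt (k : nat) := {ffun 'I_k -> nat}.
Definition origin k : pt k := [ffun => 0%N].
Definition unitv k (i : 'I_k) : pt k := [ffun c => nat_of_bool (c == i)].
Definition order k (x : pt k) : nat := (\sum_(c < k) x c)%N.

(* A lattice path is given by its start point a and its sequence of unit steps s;
   pos a s j is its j-th point (after j steps). *)
Definition pos k (a : pt k) (s : seq 'I_k) (j : nat) : pt k :=
  [ffun c => (a c + count_mem c (take j s))%N].

(* s (with n steps) leads from a to y, and all points other than the endpoint
   (points 0..n-1) lie in R. *)
Definition good_path k (R : pred (pt k)) (a y : pt k) n (s : n.-tuple 'I_k) : bool :=
  (pos a s n == y) && [forall j : 'I_n, R (pos a s j)].

Definition npaths k (R : pred (pt k)) (a y : pt k) n : nat :=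
  #|[set s : n.-tuple 'I_k | good_path R a y s]|.

Definition kcount k (R : pred (pt k)) (y : pt k) : nat :=
  npaths R (origin k) y (order y).
Definition kstar k (R : pred (pt k)) (i : 'I_k) (y : pt k) : nat :=
  npaths R (unitv i) y (order y).-1.

Definition inB k (R : pred (pt k)) (y : pt k) : bool :=
  ~~ R y && [exists i : 'I_k, (0 < y i)%N && R [ffun c => (y c - nat_of_bool (c == i))%N]].

Definition accessible_region k (R : pred (pt k)) : Prop :=
  R (origin k) /\ forall x, R x -> (0 < kcount R x)%N.

(* points of order n all lie in the box {0..n}^k *)
Definition box_pt k n (x : {ffun 'I_k -> 'I_n.+1}) : pt k := [ffun c => nat_of_ord (x c)].

Definition level_sum (Rr : realType) k (P : pred (pt k)) n (f : pt k -> Rr) : Rr :=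
  \sum_(x : {ffun 'I_k -> 'I_n.+1} | (order (box_pt x) == n) && P (box_pt x)) f (box_pt x).

Definition is_param (Rr : realType) k (p : 'I_k -> Rr) : Prop :=
  (forall j, 0 < p j) /\ \sum_(j < k) p j = 1.

Definition probP (Rr : realType) k (R : pred (pt k)) (p : 'I_k -> Rr) (y : pt k) : Rr :=
  (kcount R y)%:R * \prod_(c < k) p c ^+ y c.

(* sum_{y in B} f(y) = l, the (countable) sum being taken level by level *)
Definition sumB (Rr : realType) k (R : pred (pt k)) (f : pt k -> Rr) (l : Rr) : Prop :=
  (fun N : nat => \sum_(n < N) level_sum (inB R) n f) @ \oo --> l.

Definition closed_region (Rr : realType) k (R : pred (pt k)) : Prop :=
  forall p : 'I_k -> Rr, is_param p -> sumB R (probP R p) 1.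

Definition in_hull (Rr : realType) k (R : pred (pt k)) n (z : pt k) : Prop :=
  exists lam : {ffun 'I_k -> 'I_n.+1} -> Rr,
    (forall x, 0 <= lam x) /\
    (forall x, ~~ ((order (box_pt x) == n) && R (box_pt x)) -> lam x = 0) /\
    \sum_x lam x = 1 /\
    (forall c, \sum_x lam x * (box_pt x c)%:R = (z c)%:R).

Definition simple_region (Rr : realType) k (R : pred (pt k)) : Prop :=
  forall n (z : pt k), order z = n -> ~~ R z -> ~ in_hull Rr R n z.

Definition phat (Rr : realType) k (R : pred (pt k)) (i : 'I_k) (y : pt k) : Rr :=
  (kstar R i y)%:R / (kcount R y)%:R.

Definition bounded_on_B (Rr : realType) k (R : pred (pt k)) (U : pt k -> Rr) : Prop :=
  exists M : Rr, forall y, inB R y -> `|U y| <= M.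

Definition unbiased_for (Rr : realType) k (R : pred (pt k)) (i : 'I_k) (U : pt k -> Rr) : Prop :=
  forall p : 'I_k -> Rr, is_param p -> sumB R (fun y => U y * probP R p y) (p i).

(* Main.v *)
Require Import Defs.
From HB Require Import structures.
From mathcomp Require Import all_boot all_order all_algebra.
From mathcomp Require Import all_classical all_reals all_analysis.
From mathcomp Require Import ring lra.
Require Import Defs.
Import Order.TTheory GRing.Theory Num.Theory.
Import numFieldNormedType.Exports.
Set Implicit Arguments. Unset Strict Implicit. Unset Printing Implicit Defensive.
Local Open Scope ring_scope.

Definition mono (Rr : realType) k (p : 'I_k -> Rr) (y : pt k) : Rr :=
  \prod_(c < k) p c ^+ y c.
Definition addpt k (a b : pt k) : pt k := [ffun c => (a c + b c)%N].
Definition Phi (Rr : realType) k (R : pred (pt k)) (p : 'I_k -> Rr) m (a : pt k)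
  (F : pt k -> Rr) : Rr :=
  \sum_(s : m.-tuple 'I_k | [forall j : 'I_m, R (pos a s j)])
     F (pos a s m) * mono p (pos a s m).

Lemma pos_cons0 k (a : pt k) c (s : seq 'I_k) : pos a (c :: s) 0 = a.
Proof. by apply/ffunP => x; rewrite !ffunE /= addn0. Qed.

Lemma pos_consS k (a : pt k) c (s : seq 'I_k) j :
  pos a (c :: s) j.+1 = pos (addpt a (unitv c)) s j.
Proof.
apply/ffunP => x; rewrite !ffunE /= addnA; congr (_ + _)%N; idtac.
by rewrite eq_sym.
Qed.

Lemma pos_full k (a : pt k) m (s : m.-tuple 'I_k) j : (m <= j)%N ->
  pos a s j = pos a s m.
Proof. by move=> hj; apply/ffunP => x; rewrite !ffunE !take_oversize // size_tuple. Qed.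

Lemma sum_tuple_cons (Rr : realType) (T : finType) m (G : m.+1.-tuple T -> Rr) :
  \sum_(s : m.+1.-tuple T) G s = \sum_(c : T) \sum_(t : m.-tuple T) G [tuple of c :: t].
Proof.
rewrite pair_big /=.
rewrite (reindex (fun q : T * m.-tuple T => [tuple of q.1 :: q.2])) //=.
exists (fun s : m.+1.-tuple T => (thead s, [tuple of behead s])).
  by move=> [c t] _ /=; congr pair; apply/val_inj.
by move=> s _; rewrite [RHS]tuple_eta; apply/val_inj.
Qed.

Lemma sum_tuple0 (Rr : realType) (T : finType) (G : 0.-tuple T -> Rr) :
  \sum_(s : 0.-tuple T) G s = G [tuple].
Proof.
by rewrite (big_pred1 [tuple]) // => s; rewrite /= [s]tuple0; apply/esym/eqP.
Qed.

Lemma mono_add (Rr : realType) k (p : 'I_k -> Rr) a c :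
  mono p (addpt a (unitv c)) = mono p a * p c.
Proof.
rewrite /mono (bigD1 c) //= [in RHS](bigD1 c) //= -mulrA [_ * p c]mulrC mulrA.
rewrite !ffunE eqxx exprD expr1 -!mulrA; congr (_ * _).
congr (_ * _); apply: eq_bigr => x hx.
by rewrite !ffunE (negbTE hx) addn0.
Qed.

Lemma Phi0 (Rr : realType) k R (p : 'I_k -> Rr) a F :
  Phi R p 0 a F = F a * mono p a.
Proof.
rewrite /Phi big_mkcond sum_tuple0 /=.
have -> : [forall j : 'I_0, R (pos a [tuple] j)] by apply/forallP => -[].
suff -> : pos a [tuple] 0 = a by [].
by apply/ffunP => x; rewrite !ffunE addn0.
Qed.

Lemma PhiS (Rr : realType) k R (p : 'I_k -> Rr) m a F :
  Phi R p m.+1 a F = (R a)%:R * \sum_c Phi R p m (addpt a (unitv c)) F.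
Proof.
rewrite /Phi big_mkcond sum_tuple_cons mulr_sumr; apply: eq_bigr => c _.
rewrite big_mkcond mulr_sumr [RHS]big_mkcond; apply: eq_bigr => t _ /=.
have -> : [forall j : 'I_m.+1, R (pos a [tuple of c :: t] j)] =
          R a && [forall j : 'I_m, R (pos (addpt a (unitv c)) t j)].
  apply/forallP/andP => [h|[ha /forallP h] j].
    split; first by have := h ord0; rewrite /= pos_cons0.
    by apply/forallP => j; have := h (lift ord0 j); rewrite /= pos_consS.
  case: j => -[|j] hj /=; first by rewrite pos_cons0.
  by rewrite pos_consS; exact: (h (Ordinal (hj : (j < m)%N))).
rewrite /= pos_consS.
by case: (R a); case: [forall _, _]; rewrite ?mul1r ?mul0r.
Qed.

Lemma Phi_ge0 (Rr : realType) k R (p : 'I_k -> Rr) m a F :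
  (forall c, 0 <= p c) -> (forall y, 0 <= F y) -> 0 <= Phi R p m a F.
Proof.
move=> hp hF; apply: sumr_ge0 => s _; apply: mulr_ge0 => //.
by apply: prodr_ge0 => c _; apply: exprn_ge0.
Qed.

Definition ind (Rr : realType) k (R : pred (pt k)) (y : pt k) : Rr := (R y)%:R.
Definition nind (Rr : realType) k (R : pred (pt k)) (y : pt k) : Rr := (~~ R y)%:R.

Lemma Phi_ident (Rr : realType) k R (p : 'I_k -> Rr) m a :
  \sum_(c < k) p c = 1 ->
  Phi R p m a (ind Rr R) + \sum_(j < m.+1) Phi R p j a (nind Rr R) = mono p a.
Proof.
move=> hp; elim: m a => [|m IH] a.
  rewrite big_ord1 !Phi0 -mulrDl /ind /nind.
  by case: (R a); rewrite /= ?add0r ?addr0 mul1r.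
rewrite big_ord_recl.
under eq_bigr => j _ do rewrite lift0 PhiS.
rewrite PhiS Phi0.
rewrite -mulr_sumr addrCA -mulrDr exchange_big /= -big_split /=.
under eq_bigr => c _ do rewrite IH mono_add.
rewrite -mulr_sumr hp mulr1 /nind.
by case: (R a); rewrite /= ?mul0r ?mul1r ?add0r ?addr0.
Qed.


Lemma sum_count_mem k (s : seq 'I_k) : (\sum_(c < k) count_mem c s)%N = size s.
Proof.
elim: s => [|x s IH] /=; first by rewrite big1.
rewrite big_split /= IH -add1n; congr (_ + _)%N.
by rewrite (bigD1 x) //= eqxx big1 // => c /negbTE; rewrite eq_sym => ->.
Qed.

Lemma order_pos k (a : pt k) m (s : m.-tuple 'I_k) :
  order (pos a s m) = (order a + m)%N.
Proof.
rewrite /order; under eq_bigr => c _ do rewrite ffunE.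
by rewrite big_split /= take_oversize ?size_tuple // sum_count_mem size_tuple.
Qed.

Lemma coord_le_order k (y : pt k) c : (y c <= order y)%N.
Proof. by rewrite /order (bigD1 c) //= leq_addr. Qed.

Lemma box_inj k n : injective (@box_pt k n).
Proof.
move=> x y /ffunP h; apply/ffunP => c; apply/val_inj.
by have := h c; rewrite !ffunE.
Qed.

Definition tobox k n (y : pt k) : {ffun 'I_k -> 'I_n.+1} := [ffun c => inord (y c)].

Lemma tobox_box k n (y : pt k) : order y = n -> box_pt (tobox n y) = y.
Proof.
move=> hy; apply/ffunP => c; rewrite !ffunE inordK // ltnS -hy.
exact: coord_le_order.
Qed.

Lemma Phi_link (Rr : realType) k (R : pred (pt k)) (p : 'I_k -> Rr) m a F :
  Phi R p m a F =
  \sum_(x : {ffun 'I_k -> 'I_(order a + m).+1} | order (box_pt x) == (order a + m)%N)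
     F (box_pt x) * (npaths R a (box_pt x) m)%:R * mono p (box_pt x).
Proof.
set N := (order a + m)%N.
transitivity (\sum_(x : {ffun 'I_k -> 'I_N.+1} | order (box_pt x) == N)
   \sum_(s : m.-tuple 'I_k | good_path R a (box_pt x) s) F (box_pt x) * mono p (box_pt x)); last first.
  apply: eq_bigr => x _; rewrite sumr_const mulrAC mulr_natr; congr (_ *+ _).
  by rewrite /npaths; apply: eq_card => s; rewrite /in_mem /=; apply/idP/asboolP.
rewrite /Phi big_mkcond /= [RHS]big_mkcond /=.
rewrite (eq_bigr (fun x => \sum_(s : m.-tuple 'I_k) (if (order (box_pt x) == N) && good_path R a (box_pt x) s then F (box_pt x) * mono p (box_pt x) else 0))); last first.
  move=> x _; case: ifP => hx; last by rewrite big1.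
  by rewrite big_mkcond.
rewrite exchange_big /=; apply: eq_bigr => s _.
case hc: [forall j : 'I_m, R (pos a s j)]; last first.
  by rewrite big1 // => x _; rewrite /good_path hc andbF andbF.
rewrite -big_mkcond /= (big_pred1 (tobox N (pos a s m))) ?tobox_box ?order_pos //.
move=> x /=; rewrite /good_path hc andbT.
apply/andP/eqP => [[/eqP ho /eqP hx]|->].
  by apply: box_inj; rewrite hx tobox_box // order_pos.
by rewrite tobox_box ?order_pos // eqxx order_pos eqxx.
Qed.


Lemma npathsE k (R : pred (pt k)) a y n :
  npaths R a y n = #|[pred s : n.-tuple 'I_k | good_path R a y s]|.
Proof. by apply: eq_card => s; rewrite /in_mem /=; apply/asboolP/idP. Qed.

Lemma pos_rcons k (a : pt k) (s : seq 'I_k) c j : (j <= size s)%N ->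
  pos a (rcons s c) j = pos a s j.
Proof. by move=> hj; apply/ffunP => x; rewrite !ffunE -cats1 takel_cat. Qed.

Lemma pos_rcons_last k (a : pt k) (s : seq 'I_k) c :
  pos a (rcons s c) (size s).+1 = addpt (pos a s (size s)) (unitv c).
Proof.
apply/ffunP => x; rewrite !ffunE take_oversize ?size_rcons // take_oversize //.
by rewrite -cats1 count_cat /= addn0 addnA eq_sym.
Qed.

Lemma pos_step k (a : pt k) (s : seq 'I_k) j x0 : (j < size s)%N ->
  pos a s j.+1 = addpt (pos a s j) (unitv (nth x0 s j)).
Proof.
move=> hj; apply/ffunP => x; rewrite !ffunE (take_nth x0 hj).
by rewrite -cats1 count_cat /= addn0 addnA eq_sym.
Qed.

Lemma order_unitv k (i : 'I_k) : order (unitv i) = 1%N.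
Proof.
rewrite /order (bigD1 i) //= !ffunE eqxx big1 // => c hc.
by rewrite ffunE (negbTE hc).
Qed.

Lemma addpt_origin k (i : 'I_k) : addpt (origin k) (unitv i) = unitv i.
Proof. by apply/ffunP => x; rewrite !ffunE. Qed.

Lemma kstar_le_aux k (R : pred (pt k)) i y M N : R (origin k) -> N = M.+1 ->
  (#|[pred s : M.-tuple 'I_k | good_path R (unitv i) y s]| <=
   #|[pred s : N.-tuple 'I_k | good_path R (origin k) y s]|)%N.
Proof.
move=> hO eN; subst N.
have inj : injective (fun s : M.-tuple 'I_k => [tuple of i :: s]).
  by move=> s t /(congr1 val) [] /val_inj.
rewrite -(card_imset _ inj).
apply: subset_leq_card. apply/fintype.subsetP => t /imsetP[s hs ->]; move: hs; rewrite !inE.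
rewrite /good_path => /andP[hy /forallP hR].
rewrite /= pos_consS addpt_origin hy /=; apply/forallP => -[[|j] hj] /=.
  by rewrite pos_cons0.
by rewrite pos_consS addpt_origin; exact: (hR (Ordinal (hj : (j < M)%N))).
Qed.

Lemma kstar_le k (R : pred (pt k)) i y : R (origin k) ->
  (kstar R i y <= kcount R y)%N.
Proof.
move=> hO; rewrite /kstar /kcount !npathsE.
have [ey|hy] := eqVneq (order y) 0%N.
  rewrite (_ : #|_| = 0)%N //; apply: eq_card0 => s; rewrite inE /good_path.
  apply/negP => /andP[/eqP h _]; move: ey; rewrite -h order_pos order_unitv.
  by [].
by apply: kstar_le_aux => //; rewrite prednK // lt0n.
Qed.

Lemma kcount_notR k (R : pred (pt k)) y : R (origin k) ->
  (0 < kcount R y)%N -> ~~ R y -> inB R y.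
Proof.
move=> hO /card_gt0P[s]; rewrite /in_mem /= => /asboolP.
rewrite /good_path => /andP[/eqP hy /forallP hR] hny.
rewrite /inB hny /=.
move: s hy hR; case ey: (order y) => [|m] s hy hR.
  have h0 : pos (origin k) s 0 = origin k by apply/ffunP=> x; rewrite !ffunE take0.
  by move: hny; rewrite -hy h0 hO.
have hm : (m < size s)%N by rewrite size_tuple.
apply/existsP; exists (nth (tnth s ord_max) s m).
have e := pos_step (origin k) (tnth s ord_max) hm.
have -> : [ffun c => (y c - (c == nth (tnth s ord_max) s m))%N] = pos (origin k) s m.
  apply/ffunP => x; rewrite ffunE -hy e !ffunE addnK //.
rewrite -hy e !ffunE eqxx addn1 /=.
exact: (hR (Ordinal (ltnSn m))).
Qed.

Lemma kcount_inB k (R : pred (pt k)) y : accessible_region R ->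
  inB R y -> (0 < kcount R y)%N.
Proof.
move=> [hO hacc] /andP[hny /existsP[c /andP[hyc hz]]].
set z := [ffun _ => _] in hz.
have hyz : y = addpt z (unitv c).
  apply/ffunP => x; rewrite !ffunE; case: (eqVneq x c) => [->|hx].
    by rewrite subnK.
  by rewrite subn0 addn0.
have hoz : order y = (order z).+1.
  rewrite hyz /order; under eq_bigr => x _ do rewrite ffunE.
  by rewrite big_split /= -/(order (unitv c)) order_unitv addn1.
have := hacc z hz; rewrite /kcount hoz !npathsE => /card_gt0P[s].
rewrite inE /good_path => /andP[/eqP hs /forallP hR].
apply/card_gt0P; exists [tuple of rcons s c]; rewrite inE /good_path.
apply/andP; split.
  have e : (order z).+1 = (size s).+1 by rewrite size_tuple.
  by rewrite /= e pos_rcons_last (@pos_full _ _ _ s (size s)) ?size_tuple // hs -hyz.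
apply/forallP => -[j hj] /=; rewrite pos_rcons ?size_tuple //.
move: hj; rewrite ltnS leq_eqVlt => /orP[/eqP ->|hjz]; [by rewrite hs | exact: (hR (Ordinal hjz))].
Qed.


Lemma Phi_linkN (Rr : realType) k (R : pred (pt k)) (p : 'I_k -> Rr) m a F N :
  N = (order a + m)%N ->
  Phi R p m a F =
  \sum_(x : {ffun 'I_k -> 'I_N.+1} | order (box_pt x) == N)
     F (box_pt x) * (npaths R a (box_pt x) m)%:R * mono p (box_pt x).
Proof. by move=> ->; exact: Phi_link. Qed.

Lemma order_origin k : order (origin k) = 0%N.
Proof. by rewrite /order big1 // => c _; rewrite ffunE. Qed.

Lemma level_sumE (Rr : realType) k (P : pred (pt k)) n (f : pt k -> Rr) :
  level_sum P n f =
  \sum_(x : {ffun 'I_k -> 'I_n.+1} | order (box_pt x) == n)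
     (if P (box_pt x) then f (box_pt x) else 0).
Proof. by rewrite /level_sum big_mkcondr. Qed.

Lemma level_sum_eq (Rr : realType) k (P : pred (pt k)) n (f g : pt k -> Rr) :
  (forall y, P y -> f y = g y) -> level_sum P n f = level_sum P n g.
Proof. by move=> h; apply: eq_bigr => x /andP[_ /h]. Qed.

Lemma link_inB (Rr : realType) k (R : pred (pt k)) (p : 'I_k -> Rr) n F :
  R (origin k) ->
  level_sum (inB R) n (fun y => F y * probP R p y) =
  Phi R p n (origin k) (fun y => nind Rr R y * F y).
Proof.
move=> hO; rewrite (@Phi_linkN _ _ _ _ _ _ _ n) ?order_origin // level_sumE.
apply: eq_bigr => x /eqP hx; rewrite /probP /nind -/(mono p _).
have hk : npaths R (origin k) (box_pt x) n = kcount R (box_pt x) by rewrite /kcount hx.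
rewrite hk.
case hB: (inB R (box_pt x)).
  by move: hB => /andP[-> _]; rewrite mul1r mulrA.
case hR: (R (box_pt x)); first by rewrite /= !mul0r.
case: (posnP (kcount R (box_pt x))) => [->|hp]; first by rewrite !mulr0 mul0r.
by move: hB; rewrite (kcount_notR hO hp) ?hR.
Qed.

Lemma link_R (Rr : realType) k (R : pred (pt k)) (p : 'I_k -> Rr) n F :
  level_sum R n (fun y => F y * probP R p y) =
  Phi R p n (origin k) (fun y => ind Rr R y * F y).
Proof.
rewrite (@Phi_linkN _ _ _ _ _ _ _ n) ?order_origin // level_sumE.
apply: eq_bigr => x /eqP hx; rewrite /probP /ind -/(mono p _).
have hk : npaths R (origin k) (box_pt x) n = kcount R (box_pt x) by rewrite /kcount hx.
rewrite hk.
by case: (R (box_pt x)); rewrite /= ?mul1r ?mulrA // !mul0r.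
Qed.

Lemma link_kstar (Rr : realType) k (R : pred (pt k)) (p : 'I_k -> Rr) i n :
  R (origin k) ->
  level_sum (inB R) n.+1 (fun y => (kstar R i y)%:R * mono p y) =
  Phi R p n (unitv i) (nind Rr R).
Proof.
move=> hO; rewrite (@Phi_linkN _ _ _ _ _ _ _ n.+1) ?order_unitv // level_sumE.
apply: eq_bigr => x /eqP hx; rewrite /nind.
have hk : npaths R (unitv i) (box_pt x) n = kstar R i (box_pt x) by rewrite /kstar hx.
rewrite hk.
case hB: (inB R (box_pt x)).
  by move: hB => /andP[-> _]; rewrite mul1r.
case hR: (R (box_pt x)); first by rewrite /= !mul0r.
case: (posnP (kcount R (box_pt x))) => [h0|hp].
  have := kstar_le i (box_pt x) hO; rewrite h0 leqn0 => /eqP ->.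
  by rewrite mulr0 mul0r.
by move: hB; rewrite (kcount_notR hO hp) ?hR.
Qed.

Lemma order0_origin k (y : pt k) : order y = 0%N -> y = origin k.
Proof.
move=> h; apply/ffunP => c; rewrite ffunE; apply/eqP; rewrite -leqn0 -h.
exact: coord_le_order.
Qed.

Lemma level_sum_inB0 (Rr : realType) k (R : pred (pt k)) (f : pt k -> Rr) :
  R (origin k) -> level_sum (inB R) 0 f = 0.
Proof.
move=> hO; rewrite /level_sum big_pred0 // => x.
apply/negP => /andP[/eqP /order0_origin -> /andP[]]; by rewrite hO.
Qed.


Definition dot (Rr : realType) (D : finType) (u v : D -> Rr) : Rr := \sum_c u c * v c.

Definition cone (Rr : realType) (X D : finType) (Q : {set X}) (f : X -> D -> Rr) (b : D -> Rr) :=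
  exists mu : X -> Rr, (forall x, 0 <= mu x) /\ (forall x, x \notin Q -> mu x = 0) /\
    (forall c, \sum_x mu x * f x c = b c).

Lemma dot_lin2 (Rr : realType) (D : finType) (y u v : D -> Rr) s t :
  dot y (fun c => s * u c - t * v c) = s * dot y u - t * dot y v.
Proof. by rewrite /dot !mulr_sumr -sumrB; apply: eq_bigr => c _; ring. Qed.

Lemma dot_lin1 (Rr : realType) (D : finType) (w u v : D -> Rr) s t :
  dot (fun c => s * u c - t * v c) w = s * dot u w - t * dot v w.
Proof. by rewrite /dot !mulr_sumr -sumrB; apply: eq_bigr => c _; ring. Qed.

Lemma dot_sum (Rr : realType) (X D : finType) (y : D -> Rr) (mu : X -> Rr) (f : X -> D -> Rr) :
  dot y (fun c => \sum_x mu x * f x c) = \sum_x mu x * dot y (f x).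
Proof.
rewrite /dot; under eq_bigr => c _ do rewrite mulr_sumr.
rewrite exchange_big /=; apply: eq_bigr => x _; rewrite mulr_sumr.
by apply: eq_bigr => c _; ring.
Qed.

Lemma dotC (Rr : realType) (D : finType) (u v : D -> Rr) : dot u v = dot v u.
Proof. by apply: eq_bigr => c _; rewrite mulrC. Qed.

Lemma farkas (Rr : realType) (X D : finType) n : forall (Q : {set X}) (f : X -> D -> Rr) b,
  #|Q| = n -> ~ cone Q f b ->
  exists y : D -> Rr, dot y b < 0 /\ forall x, x \in Q -> 0 <= dot y (f x).
Proof.
elim: n => [|n IH] Q f b hQ hnc.
  case: (pickP (fun c => b c != 0)) => [c0 hc0|h]; last first.
    exfalso; apply: hnc; exists (fun=> 0); split=> //; split=> // c.
    rewrite big1 => [|x _]; last by rewrite mul0r.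
    by have /negbFE/eqP -> := h c.
  exists (fun c => - b c); split; last by move=> x; rewrite (card0_eq hQ).
  rewrite /dot (bigD1 c0) //=.
  under eq_bigr => i _ do rewrite mulNr.
  rewrite sumrN mulNr.
  have h2 : 0 <= \sum_(i | i != c0) b i * b i.
    by apply: sumr_ge0 => c _; rewrite -expr2 sqr_ge0.
  have h1 : 0 < b c0 * b c0.
    case: (ltrgtP (b c0) 0) => h; first by rewrite nmulr_rgt0.
      by rewrite mulr_gt0.
    by move: hc0; rewrite h eqxx.
  lra.
have : (0 < #|Q|)%N by rewrite hQ.
case/card_gt0P => x0 hx0.
set Q' := Q :\ x0.
have hQ' : #|Q'| = n by move: hQ; rewrite (cardsD1 x0) hx0 add1n => -[].
have hnc' : ~ cone Q' f b.
  move=> [mu [h1 [h2 h3]]]; apply: hnc; exists mu; split=> //; split=> // x hx.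
  by apply: h2; rewrite !inE negb_and hx orbT.
have [y [hyb hyQ]] := IH Q' f b hQ' hnc'.
case: (lerP 0 (dot y (f x0))) => ha.
  exists y; split=> // x hx; case: (eqVneq x x0) => [->//|hne].
  by apply: hyQ; rewrite !inE hne hx.
set al := dot y (f x0) in ha.
pose f' x c := al * f x c - dot y (f x) * f x0 c.
pose b' c := al * b c - dot y b * f x0 c.
have hnc2 : ~ cone Q' f' b'.
  move=> [mu [h1 [h2 h3]]]; apply: hnc.
  pose S := \sum_x mu x * dot y (f x).
  have hS : 0 <= S.
    apply: sumr_ge0 => x _; case: (boolP (x \in Q')) => hx.
      by apply: mulr_ge0 => //; apply: hyQ.
    by rewrite h2 // mul0r.
  pose th := (dot y b - S) / al.
  have hth : 0 <= th by apply: mulr_le0; [lra| rewrite invr_le0 ltW].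
  exists (fun x => mu x + (x == x0)%:R * th); split.
    by move=> x; apply: addr_ge0 => //; apply: mulr_ge0.
  split.
    move=> x hx; rewrite h2; last by rewrite !inE negb_and hx orbT.
    by case: (eqVneq x x0) hx => [->|_]; rewrite ?hx0 // mul0r addr0.
  move=> c; have := h3 c; rewrite /f' /b'.
  have -> : \sum_x mu x * (al * f x c - dot y (f x) * f x0 c) =
      al * (\sum_x mu x * f x c) - S * f x0 c.
    by rewrite mulr_sumr mulr_suml -sumrB; apply: eq_bigr => x _; ring.
  move=> e.
  under eq_bigr => x _ do rewrite mulrDl.
  rewrite big_split /= [X in _ + X](bigD1 x0) //= eqxx mul1r [X in _ + (_ + X)]big1 ?addr0; last first.
    by move=> x /negbTE ->; rewrite !mul0r.
  have hal : al != 0 by rewrite ltr0_neq0.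
  have hth' : al * th = dot y b - S by rewrite /th mulrC divfK.
  apply: (mulfI hal); rewrite mulrDr mulrA hth'.
  rewrite mulrBl; lra.
have [y' [hy'b hy'Q]] := IH Q' f' b' hQ' hnc2.
exists (fun c => al * y' c - dot y' (f x0) * y c); split.
  by rewrite dot_lin1 [dot y b]dotC -[_ * dot b y]mulrC -[dot y' b' ]/(dot y' (fun c => _)) dot_lin2 -dotC in hy'b *; rewrite [dot b y]dotC.
move=> x hx; rewrite dot_lin1.
case: (eqVneq x x0) => [->|hne].
  by rewrite -/al mulrC subrr.
have := hy'Q x; rewrite !inE hne hx /= => /(_ isT).
by rewrite /f' dot_lin2 [dot y (f x) * _]mulrC.
Qed.


Definition conv (Rr : realType) (X D : finType) (Q : pred X) (f : X -> D -> Rr) (z : D -> Rr) : Prop :=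
  exists lam : X -> Rr, (forall x, 0 <= lam x) /\ (forall x, ~~ Q x -> lam x = 0) /\
    \sum_x lam x = 1 /\ (forall c, \sum_x lam x * f x c = z c).

Lemma sum_option (Rr : realType) (D : finType) (G : option D -> Rr) :
  \sum_o G o = G None + \sum_c G (Some c).
Proof.
rewrite (bigD1 None) //=; congr (_ + _).
rewrite (reindex_omap Some id) //=; last by case.
by apply: eq_bigl => c; rewrite eqxx.
Qed.

Lemma separate (Rr : realType) (X D : finType) (Q : pred X) (f : X -> D -> Rr) z :
  ~ conv Q f z -> exists a : D -> Rr, forall x, Q x -> dot a (f x) < dot a z.
Proof.
move=> hnc.
pose g x := fun o : option D => if o is Some c then f x c else 1.
pose b := fun o : option D => if o is Some c then z c else 1.
have hnc' : ~ cone [set x | Q x] g b.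
  move=> [mu [h1 [h2 h3]]]; apply: hnc; exists mu; split=> //; split.
    by move=> x hx; apply: h2; rewrite inE.
  split; last by move=> c; exact: (h3 (Some c)).
  by have := h3 None; under eq_bigr do rewrite mulr1.
have [y [hyb hyQ]] := farkas (erefl #|[set x | Q x]|) hnc'.
exists (fun c => - y (Some c)) => x hx.
have := hyQ x; rewrite inE hx => /(_ isT).
move: hyb; rewrite /dot !sum_option /=.
have hN : forall u : D -> Rr, \sum_c - y (Some c) * u c = - \sum_c y (Some c) * u c.
  by move=> u; rewrite -sumrN; apply: eq_bigr => c _; rewrite mulNr.
rewrite !hN; lra.
Qed.

Lemma extreme (Rr : realType) (X D : finType) (f : X -> D -> Rr) (Rn S : pred X) x1 :
  (forall x y, f x =1 f y -> x = y) -> S x1 ->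
  (forall x, S x -> ~ conv Rn f (f x)) ->
  exists y0, S y0 /\ exists a : D -> Rr,
    forall x, Rn x || S x -> x != y0 -> dot a (f x) < dot a (f y0).
Proof.
move=> finj Sx1 hs.
have [a ha] := separate (hs x1 Sx1).
case: (@arg_maxP _ _ _ x1 S (fun x => dot a (f x))) => // y1 Sy1 hy1.
pose S1 := [pred x | S x && (dot a (f x) == dot a (f y1))].
case: (@arg_maxP _ _ _ y1 S1 (fun x => dot (f x) (f x))) => [|y0 S1y0 hy0].
  by rewrite /S1 /= Sy1 eqxx.
move: (S1y0) => /andP[Sy0 /eqP hm].
exists y0; split=> //.
have [a' ha'] : exists a' : D -> Rr, forall x, ((Rn x || S x) && (x != y0)) ->
    dot a' (f x) < dot a' (f y0).
  apply: separate => -[lam [l0 [lQ [l1 lf]]]].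
  have lP : forall x, lam x != 0 -> (Rn x || S x) && (x != y0).
    by move=> x; apply: contraNT => /lQ ->.
  have hf : (fun c => \sum_x lam x * f x c) = f y0 by apply: boolp.funext => c; exact: lf.
  set m := dot a (f y0).
  have e1 : \sum_x lam x * (m - dot a (f x)) = 0.
    rewrite (eq_bigr (fun x => m * lam x - lam x * dot a (f x))); last first.
      by move=> x _; ring.
    by rewrite sumrB -mulr_sumr l1 mulr1 -dot_sum hf subrr.
  have t1 : forall x, 0 <= lam x * (m - dot a (f x)).
    move=> x; case: (eqVneq (lam x) 0) => [->|hx]; first by rewrite mul0r.
    apply: mulr_ge0 => //; rewrite subr_ge0 /m hm.
    case/andP: (lP x hx) => /orP[hR|hS] _; last exact: hy1.
    by apply: ltW; apply: (lt_le_trans (ha x hR)); apply: hy1.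
  have t2 : forall x, lam x != 0 -> S1 x.
    move=> x hx; have := @psumr_eq0P _ _ _ _ (fun x _ => t1 x) e1 x isT.
    move/eqP; rewrite mulf_eq0 (negbTE hx) /= subr_eq0 => /eqP e.
    case/andP: (lP x hx) => /orP[hR|hS] _.
      by have := ha x hR; rewrite -e /m hm => /(lt_le_trans)/(_ (hy1 _ Sx1)); rewrite ltxx.
    by rewrite /S1 /= hS -hm -/m e eqxx.
  pose d x := fun c => f x c - f y0 c.
  have dd : forall x, dot (d x) (d x) =
      dot (f x) (f x) - 2 * dot (f y0) (f x) + dot (f y0) (f y0).
    by move=> x; rewrite /dot mulr_sumr -sumrB -big_split; apply: eq_bigr => c _ /=; rewrite /d; ring.
  have e2 : \sum_x lam x * dot (d x) (d x) =
      \sum_x lam x * dot (f x) (f x) - dot (f y0) (f y0).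
    under eq_bigr => x _ do rewrite dd.
    rewrite (eq_bigr (fun x => lam x * dot (f x) (f x) - 2 * (lam x * dot (f y0) (f x))
              + dot (f y0) (f y0) * lam x)); last by move=> x _; ring.
    rewrite big_split /= sumrB -mulr_sumr -mulr_sumr l1 mulr1 -dot_sum hf; ring.
  have e3 : \sum_x lam x * dot (f x) (f x) <= dot (f y0) (f y0).
    rewrite -[X in _ <= X]mul1r -l1 mulr_suml; apply: ler_sum => x _.
    case: (eqVneq (lam x) 0) => [->|hx]; first by rewrite !mul0r.
    apply: ler_wpM2l => //; exact: hy0 (t2 x hx).
  have t3 : forall x, 0 <= lam x * dot (d x) (d x).
    move=> x; apply: mulr_ge0 => //; apply: sumr_ge0 => c _.
    by rewrite -expr2 sqr_ge0.
  have e4 : \sum_x lam x * dot (d x) (d x) = 0.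
    apply/eqP; rewrite eq_le; apply/andP; split; first by rewrite e2 subr_le0.
    by apply: sumr_ge0 => x _.
  have : \sum_x lam x = 0.
    apply: big1 => x _; apply/eqP; apply: contraT => hx.
    have := @psumr_eq0P _ _ _ _ (fun x _ => t3 x) e4 x isT.
    move/eqP; rewrite mulf_eq0 (negbTE hx) /= => /eqP e5.
    have hxy : x = y0.
      apply: finj => c; apply/eqP; rewrite -subr_eq0; apply/eqP.
      have t4 : forall c, 0 <= d x c * d x c by move=> c'; rewrite -expr2 sqr_ge0.
      have := @psumr_eq0P _ _ _ _ (fun c _ => t4 c) e5 c isT.
      by move/eqP; rewrite mulf_eq0 orbb => /eqP.
    by case/andP: (lP x hx) => _; rewrite hxy eqxx.
  by rewrite l1 => /eqP; rewrite oner_eq0.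
exists a' => x hx hne; apply: ha'; by rewrite hx hne.
Qed.


Local Open Scope classical_set_scope.
Local Open Scope ring_scope.

Lemma mono_origin (Rr : realType) k (p : 'I_k -> Rr) : mono p (origin k) = 1.
Proof. by rewrite /mono big1 // => c _; rewrite ffunE expr0. Qed.

Lemma mono_unitv (Rr : realType) k (p : 'I_k -> Rr) i : mono p (unitv i) = p i.
Proof. by rewrite -addpt_origin mono_add mono_origin mul1r. Qed.

Lemma mono_ge0 (Rr : realType) k (p : 'I_k -> Rr) y : (forall c, 0 <= p c) -> 0 <= mono p y.
Proof. by move=> h; apply: prodr_ge0 => c _; apply: exprn_ge0. Qed.

Lemma ind_ge0 (Rr : realType) k (R : pred (pt k)) y : 0 <= ind Rr R y.
Proof. by rewrite /ind ler0n. Qed.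

Lemma closed_A0 (Rr : realType) k (R : pred (pt k)) (p : 'I_k -> Rr) :
  R (origin k) -> is_param p -> sumB R (probP R p) 1 ->
  (fun M => Phi R p M (origin k) (ind Rr R)) @ \oo --> 0.
Proof.
move=> hO [hp0 hp1] hcl.
have e : forall M, Phi R p M (origin k) (ind Rr R) =
    1 - \sum_(m < M.+1) level_sum (inB R) m (probP R p).
  move=> M; have := @Phi_ident _ _ R p M (origin k) hp1; rewrite mono_origin => e.
  rewrite -[X in X - _]e.
  suff -> : \sum_(m < M.+1) level_sum (inB R) m (probP R p) =
     \sum_(j < M.+1) Phi R p j (origin k) (nind Rr R) by rewrite addrK.
  apply: eq_bigr => m _.
  rewrite (_ : probP R p = fun y => 1 * probP R p y); last first.
    by apply: boolp.funext => y; rewrite mul1r.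
  rewrite link_inB //; congr Phi; apply: boolp.funext => y; by rewrite mulr1.
rewrite (boolp.funext e).
have hT := hcl; rewrite /sumB -cvg_shiftS in hT.
have h := cvgB (cvg_cst (1:Rr)) hT; rewrite subrr in h; exact: h.
Qed.

Lemma phat_unbiased (Rr : realType) k (R : pred (pt k)) i :
  accessible_region R -> closed_region Rr R -> unbiased_for R i (phat Rr R i).
Proof.
move=> hacc hcl p hp; have [hO _] := hacc; have hp' := hp; move: hp' => [hp0 hp1].
have hA0 := closed_A0 hO hp (hcl p hp).
pose A M := Phi R p M (unitv i) (ind Rr R).
have hE : forall m, level_sum (inB R) m (fun y => phat Rr R i y * probP R p y) =
    level_sum (inB R) m (fun y => (kstar R i y)%:R * mono p y).
  move=> m; apply: level_sum_eq => y hy.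
  rewrite /phat /probP -/(mono p y) mulrA divfK //.
  by rewrite pnatr_eq0 -lt0n; apply: kcount_inB.
have eS : forall M, \sum_(m < M.+2) level_sum (inB R) m (fun y => phat Rr R i y * probP R p y)
    = p i - A M.
  move=> M; rewrite big_ord_recl level_sum_inB0 // add0r.
  rewrite -(mono_unitv p i) -(@Phi_ident _ _ R p M (unitv i) hp1) addrC addKr.
  by apply: eq_bigr => m _; rewrite hE link_kstar.
have hA : A @ \oo --> 0.
  apply: (@squeeze_cvgr _ _ _ _ (fun=> 0) (fun M => Phi R p M.+1 (origin k) (ind Rr R))).
  - apply: nearW => M; apply/andP; split; first by apply: Phi_ge0 => [c|y]; [exact: ltW | exact: ind_ge0].
    rewrite PhiS hO mul1r (bigD1 i) //= addpt_origin lerDl.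
    apply: sumr_ge0 => c _; apply: Phi_ge0 => [c'|y]; [exact: ltW | exact: ind_ge0].
  - exact: cvg_cst.
  - by rewrite (cvg_shiftS (fun M => Phi R p M (origin k) (ind Rr R))).
rewrite /sumB -(cvg_shiftn 2) /=.
rewrite (_ : (fun n => _) = (fun M => p i - A M)); last first.
  by apply: boolp.funext => M; rewrite addn2 eS.
have h := cvgB (cvg_cst (p i)) hA; rewrite subr0 in h; exact: h.
Qed.


Lemma E_level (Rr : realType) k (R : pred (pt k)) (p : 'I_k -> Rr) m :
  R (origin k) -> Phi R p m (origin k) (nind Rr R) = level_sum (inB R) m (probP R p).
Proof.
move=> hO; rewrite (_ : probP R p = fun y => 1 * probP R p y); last first.
  by apply: boolp.funext => y; rewrite mul1r.
rewrite link_inB //; congr Phi; apply: boolp.funext => y; by rewrite mulr1.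
Qed.

Lemma probP_ge0 (Rr : realType) k (R : pred (pt k)) (p : 'I_k -> Rr) y :
  (forall c, 0 <= p c) -> 0 <= probP R p y.
Proof. by move=> h; apply: mulr_ge0; [exact: ler0n | exact: mono_ge0]. Qed.

Lemma key_bound (Rr : realType) k (R : pred (pt k)) (p : 'I_k -> Rr) n (D : pt k -> Rr) M' :
  R (origin k) -> is_param p -> 0 <= M' ->
  (forall y, inB R y -> `|D y| <= M') ->
  (forall y, inB R y -> (order y < n)%N -> D y = 0) ->
  sumB R (fun y => D y * probP R p y) 0 ->
  `|level_sum (inB R) n (fun y => D y * probP R p y)| <= M' * Phi R p n (origin k) (ind Rr R).
Proof.
move=> hO [hp0 hp1] hM hDb hlow hs.
have hp : forall c, 0 <= p c by move=> c; exact: ltW.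
pose L m := level_sum (inB R) m (fun y => D y * probP R p y).
pose E m := Phi R p m (origin k) (nind Rr R).
pose A m := Phi R p m (origin k) (ind Rr R).
have hA0 : forall m, 0 <= A m by move=> m; apply: Phi_ge0 => // y; exact: ind_ge0.
have hLlow : forall m, (m < n)%N -> L m = 0.
  move=> m hm; apply: big1 => x /andP[/eqP ho hB].
  by rewrite hlow ?mul0r // ho.
have hLE : forall m, `|L m| <= M' * E m.
  move=> m; rewrite /E E_level // /level_sum mulr_sumr.
  apply: le_trans (ler_norm_sum _ _ _) _; apply: ler_sum => x /andP[_ hB].
  by rewrite normrM [`|probP _ _ _|]ger0_norm ?probP_ge0 // ler_wpM2r ?probP_ge0 // hDb.
have hEsum : forall N, \sum_(j < N) E (n.+1 + j)%N <= A n.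
  move=> N.
  have e1 := @Phi_ident _ _ R p (n + N) (origin k) hp1.
  have e2 := @Phi_ident _ _ R p n (origin k) hp1.
  rewrite -addSn big_split_ord /= in e1.
  have s1 : \sum_(i < n.+1) Phi R p (lshift N i) (origin k) (nind Rr R) =
     \sum_(j < n.+1) Phi R p j (origin k) (nind Rr R) by [].
  have s2 : \sum_(i < N) Phi R p (rshift n.+1 i) (origin k) (nind Rr R) =
     \sum_(j < N) E (n.+1 + j)%N by [].
  rewrite s1 s2 in e1.
  have := hA0 (n + N)%N; rewrite /A /E in e1 e2 *; lra.
have hsplit : forall N, \sum_(m < (n.+1 + N)%N) L m = L n + \sum_(j < N) L (n.+1 + j)%N.
  move=> N; rewrite big_split_ord /= big_ord_recr /= big1 ?add0r //.
  by move=> j _; apply: hLlow.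
have hfin : forall N, `|L n| <= `|\sum_(m < (n.+1 + N)%N) L m| + M' * A n.
  move=> N; rewrite hsplit.
  have h1 : `|\sum_(j < N) L (n.+1 + j)%N| <= M' * A n.
    apply: le_trans (ler_norm_sum _ _ _) _.
    apply: (@le_trans _ _ (\sum_(j < N) M' * E (n.+1 + j)%N)); first by apply: ler_sum => j _; exact: hLE.
    by rewrite -mulr_sumr ler_wpM2l // hEsum.
  have := ler_normB (L n + \sum_(j < N) L (n.+1 + j)%N) (\sum_(j < N) L (n.+1 + j)%N).
  rewrite addrK; lra.
apply/ler_addgt0Pr => e he.
move: hs; rewrite /sumB => hs.
have := @cvgr0_norm_lt _ _ _ _ _ _ hs _ he => -[N0 _ hN0].
have := hN0 (n.+1 + N0)%N; rewrite /= leq_addl => /(_ isT) hlt.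
rewrite /L /A in hfin *; have := hfin N0; move: hlt => h1 h2.
apply: (le_trans h2); rewrite addrC lerD2l; exact: ltW.
Qed.


Lemma term_bound (Rr : realType) (W g t E0 : Rr) : 0 <= W -> 0 < g -> 0 < t -> 0 < E0 ->
  W * (E0 * expR (- (t * g))) <= E0 * (W / g) / t.
Proof.
move=> hW hg ht hE.
have hu : 0 < t * g by rewrite mulr_gt0.
have h2 : expR (- (t * g)) <= (t * g)^-1.
  rewrite expRN lef_pV2 ?posrE ?expR_gt0 //.
  have := expR_ge1Dx (t * g); lra.
apply: (@le_trans _ _ (W * (E0 * (t * g)^-1))).
  by apply: ler_wpM2l => //; apply: ler_wpM2l => //; exact: ltW.
rewrite invfM le_eqVlt; apply/orP; left; apply/eqP; ring.
Qed.

Lemma phat_norm (Rr : realType) k (R : pred (pt k)) i y :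
  accessible_region R -> inB R y -> `|phat Rr R i y| <= 1.
Proof.
move=> hacc hy; have kpos := kcount_inB hacc hy; have [hO _] := hacc.
rewrite /phat ger0_norm ?divr_ge0 ?ler0n // ler_pdivrMr ?ltr0n // mul1r ler_nat.
exact: kstar_le.
Qed.

Lemma mono_div (Rr : realType) k (q : 'I_k -> Rr) Z (y : pt k) :
  mono (fun c => q c / Z) y = mono q y / Z ^+ order y.
Proof.
by rewrite /mono; under eq_bigr do rewrite expr_div_n; rewrite prodf_div prodrXr.
Qed.

Lemma mono_expR (Rr : realType) k (a : 'I_k -> Rr) t (y : pt k) :
  mono (fun c => expR (t * a c)) y = expR (t * dot a (fun c => (y c)%:R)).
Proof.
rewrite /mono /dot mulr_sumr expR_sum; apply: eq_bigr => c _.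
by rewrite -expRM_natr mulrA.
Qed.

Lemma A_level (Rr : realType) k (R : pred (pt k)) (p : 'I_k -> Rr) m :
  Phi R p m (origin k) (ind Rr R) = level_sum R m (probP R p).
Proof.
rewrite (_ : probP R p = fun y => 1 * probP R p y); last first.
  by apply: boolp.funext => y; rewrite mul1r.
rewrite link_R //; congr Phi; apply: boolp.funext => y; by rewrite mulr1.
Qed.


Lemma eq_ler (Rr : realType) (u v : Rr) : u = v -> u <= v.
Proof. by move=> ->. Qed.

Lemma unique_main (Rr : realType) k (R : pred (pt k)) i (U : pt k -> Rr) :
  (0 < k)%N -> accessible_region R -> simple_region Rr R -> closed_region Rr R ->
  bounded_on_B R U -> unbiased_for R i U -> forall y, inB R y -> U y = phat Rr R i y.
Proof.
move=> hk hacc hsimp hcl [M hM] hU y' hy'.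
have [hO _] := hacc.
pose D y := U y - phat Rr R i y.
have hD : forall p, is_param p -> sumB R (fun y => D y * probP R p y) 0.
  move=> p hp; have h1 := hU p hp; have h2 := @phat_unbiased _ _ _ i hacc hcl p hp.
  rewrite /sumB in h1 h2 *.
  rewrite (_ : (fun N => _) = (fun N => (\sum_(n < N) level_sum (inB R) n (fun y => U y * probP R p y)) -
       \sum_(n < N) level_sum (inB R) n (fun y => phat Rr R i y * probP R p y))); last first.
    apply: boolp.funext => N; rewrite -sumrB; apply: eq_bigr => m _.
    by rewrite /level_sum -sumrB; apply: eq_bigr => x _; rewrite /D mulrBl.
  have h3 := cvgB h1 h2; rewrite subrr in h3; exact: h3.
pose M' := `|M| + 1.
have hM' : 0 <= M' by rewrite /M'; have := normr_ge0 M; lra.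
have hDb : forall y, inB R y -> `|D y| <= M'.
  move=> y hy; apply: le_trans (ler_normB _ _) _.
  have := hM y hy; have := @phat_norm Rr _ _ i _ hacc hy; have := ler_norm M; rewrite /M'; lra.
apply/eqP; apply: contraT => hne.
pose P n := [exists x : {ffun 'I_k -> 'I_n.+1},
   (order (box_pt x) == n) && inB R (box_pt x) && (D (box_pt x) != 0)].
have exP : exists n, P n.
  exists (order y'); apply/existsP; exists (tobox (order y') y').
  by rewrite tobox_box // eqxx hy' /= /D subr_eq0 hne.
case: (ex_minnP exP) => n /existsP[x1 hx1] hmin.
have hlow : forall y, inB R y -> (order y < n)%N -> D y = 0.
  move=> y hy hlt; apply/eqP; apply: contraT => hDy.
  have Pm : P (order y).
    by apply/existsP; exists (tobox (order y) y); rewrite tobox_box // eqxx hy hDy.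
  by have := hmin _ Pm; rewrite leqNgt hlt.
pose f (x : {ffun 'I_k -> 'I_n.+1}) (c : 'I_k) : Rr := (box_pt x c)%:R.
pose Rn := fun x : {ffun 'I_k -> 'I_n.+1} => (order (box_pt x) == n) && R (box_pt x).
pose PB := fun x : {ffun 'I_k -> 'I_n.+1} => (order (box_pt x) == n) && inB R (box_pt x).
pose S := fun x : {ffun 'I_k -> 'I_n.+1} => PB x && (D (box_pt x) != 0).
have finj : forall x y, f x =1 f y -> x = y.
  move=> x y h; apply: box_inj; apply/ffunP => c; apply/eqP.
  by rewrite -(eqr_nat Rr); apply/eqP; exact: h.
have hs : forall x, S x -> ~ conv Rn f (f x).
  move=> x /andP[/andP[/eqP ho /andP[hnR _]] _] hc.
  exact: (hsimp n (box_pt x) ho hnR hc).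
have [y0 [Sy0 [a ha]]] := @extreme Rr _ _ f Rn S x1 finj hx1 hs.
have hy0n : order (box_pt y0) = n by case/andP: Sy0 => /andP[/eqP].
have hy0B : inB R (box_pt y0) by case/andP: Sy0 => /andP[].
have hy0D : D (box_pt y0) != 0 by case/andP: Sy0.
pose K (x : {ffun 'I_k -> 'I_n.+1}) := ((kcount R (box_pt x))%:R : Rr).
have hK0 : forall x, 0 <= K x by move=> x; exact: ler0n.
pose W (x : {ffun 'I_k -> 'I_n.+1}) := (if S x && (x != y0) then `|D (box_pt x)| * K x else 0) +
            (if Rn x then M' * K x else 0).
pose g x := dot a (f y0) - dot a (f x).
have hW0 : forall x, 0 <= W x.
  move=> x; apply: addr_ge0; case: ifP => // _; apply: mulr_ge0 => //.
have hWg : forall x, W x != 0 -> 0 < g x.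
  move=> x hx.
  have hP : (Rn x || S x) && (x != y0).
    move: hx; rewrite /W.
    case hS: (S x && (x != y0)); case hR: (Rn x) => hx.
    - by case/andP: hS => _ ->.
    - by rewrite orFb hS.
    - rewrite orTb /=; apply: contraTneq hR => ->.
      apply/negP => /andP[_ hR0].
      by move: hy0B => /andP[]; rewrite hR0.
    - by move: hx; rewrite addr0 eqxx.
  by case/andP: hP => h1 h2; rewrite /g subr_gt0; exact: ha.
pose G := \sum_x W x / g x.
have hG : 0 <= G.
  apply: sumr_ge0 => x _; case: (eqVneq (W x) 0) => [->|hx]; first by rewrite mul0r.
  by apply: divr_ge0 => //; apply: ltW; apply: hWg.
pose c0 := `|D (box_pt y0)| * K y0.
have hc0 : 0 < c0.
  apply: mulr_gt0; first by rewrite normr_gt0.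
  by rewrite ltr0n; apply: kcount_inB.
pose t := G / c0 + 1.
have ht : 0 < t by rewrite /t; have := divr_ge0 hG (ltW hc0); lra.
pose q c := expR (t * a c).
pose Z := \sum_c q c.
have hZ : 0 < Z.
  rewrite /Z (bigD1 (Ordinal hk)) //=; apply: ltr_pwDl; first exact: expR_gt0.
  by apply: sumr_ge0 => c _; exact: expR_ge0.
pose p c := q c / Z.
have hp : is_param p.
  split; first by move=> j; apply: divr_gt0 => //; exact: expR_gt0.
  by rewrite /p -mulr_suml -/Z divff // gt_eqF.
have hp0' : forall c, 0 <= p c by move=> c; apply: ltW; case: hp => + _; apply.
have hkb := key_bound hO hp hM' hDb hlow (hD p hp).
rewrite A_level in hkb.
pose E x := expR (t * dot a (f x)).
have hmono : forall x, mono p (box_pt x) = E x / Z ^+ order (box_pt x).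
  by move=> x; rewrite /p mono_div mono_expR.
have hPx : forall x, probP R p (box_pt x) = K x * mono p (box_pt x) by [].
have hineq : c0 * mono p (box_pt y0) <= \sum_x W x * mono p (box_pt x).
  move: hkb; rewrite /level_sum (bigD1 y0) /=; last by rewrite hy0n eqxx hy0B.
  set T1 := \sum_(x | _) _; set T2 := \sum_(x | _) _ => hkb.
  have e1 : `|D (box_pt y0) * probP R p (box_pt y0)| = c0 * mono p (box_pt y0).
    rewrite normrM hPx [`|K y0 * _|]ger0_norm ?mulrA //.
    by apply: mulr_ge0 => //; exact: mono_ge0.
  have e2 : `|T1| <= \sum_x (if S x && (x != y0) then `|D (box_pt x)| * K x else 0)
              * mono p (box_pt x).
    apply: le_trans (ler_norm_sum _ _ _) _.
    rewrite [X in _ <= X](bigID (fun x => PB x && (x != y0))) /=.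
    rewrite [X in _ <= _ + X]big1 ?addr0; last first.
      by move=> x /negbTE; rewrite /S -andbA andbCA => ->; rewrite andbF mul0r.
    apply: ler_sum => x /andP[hx1' hx2].
    have -> : S x && (x != y0) = (D (box_pt x) != 0) by rewrite /S /PB hx1' hx2 andbT.
    case: (eqVneq (D (box_pt x)) 0) => [->|_] /=.
      by rewrite mul0r normr0 mul0r.
    rewrite normrM hPx [`|K x * _|]ger0_norm ?mulrA //; apply: mulr_ge0 => //; exact: mono_ge0.
  have e3 : T2 = \sum_x (if Rn x then K x else 0) * mono p (box_pt x).
    rewrite /T2 big_mkcond /=; apply: eq_bigr => x _.
    by rewrite /Rn; case: ifP => _; rewrite ?mul0r.
  have := ler_normB (D (box_pt y0) * probP R p (box_pt y0) + T1) T1.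
  rewrite addrK e1 => h.
  apply: (le_trans h); apply: (le_trans (lerD hkb e2)).
  rewrite e3 mulr_sumr -big_split /=; apply: ler_sum => x _.
  by rewrite /W; case: ifP => _; case: ifP => _; apply: eq_ler; ring.
have hWlev : forall x, W x != 0 -> order (box_pt x) = n.
  move=> x; rewrite /W; case: ifP => [/andP[/andP[/andP[/eqP -> _] _] _]//|_].
  by case: ifP => [/andP[/eqP -> _]//|_]; rewrite addr0 eqxx.
have hE0 : forall x, 0 < E x by move=> x; exact: expR_gt0.
have hZn : 0 < (Z ^+ n)^-1 by rewrite invr_gt0 exprn_gt0.
have hineq2 : c0 * E y0 <= \sum_x W x * E x.
  have e : \sum_x W x * mono p (box_pt x) = (\sum_x W x * E x) * (Z ^+ n)^-1.
    rewrite mulr_suml; apply: eq_bigr => x _.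
    case: (eqVneq (W x) 0) => [->|hx]; first by rewrite !mul0r.
    by rewrite hmono hWlev // mulrA.
  move: hineq; rewrite e hmono hy0n mulrA.
  by rewrite ler_pM2r.
have hineq3 : \sum_x W x * E x <= E y0 * G / t.
  rewrite /G mulr_sumr mulr_suml; apply: ler_sum => x _.
  case: (eqVneq (W x) 0) => [->|hx]; first by rewrite !mul0r mulr0 mul0r.
  have -> : E x = E y0 * expR (- (t * g x)).
    by rewrite /E /g -expRD; congr expR; ring.
  exact: term_bound (hW0 x) (hWg x hx) ht (hE0 y0).
have h := le_trans hineq2 hineq3.
have h5 : c0 * E y0 * t <= E y0 * G.
  by move: (ler_wpM2r (ltW ht) h); rewrite divfK ?gt_eqF.
have h6 : c0 * t <= G.
  rewrite -(ler_pM2r (hE0 y0)); move: h5; rewrite mulrAC [E y0 * G]mulrC //.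
have h7 : c0 * t = G + c0.
  by rewrite /t mulrDr mulr1 mulrC divfK // gt_eqF.
lra.
Qed.


Local Close Scope classical_set_scope.
Unset Implicit Arguments.

Theorem theorem2 (Rr : realType) (k : nat) (R : pred (pt k)) :
  (2 <= k)%N -> accessible_region R -> simple_region Rr R -> closed_region Rr R ->
  forall i : 'I_k,
    (bounded_on_B R (phat Rr R i) /\ unbiased_for R i (phat Rr R i)) /\
    (forall U : pt k -> Rr, bounded_on_B R U -> unbiased_for R i U ->
       forall y, inB R y -> U y = phat Rr R i y).
Proof.
move=> hk hacc hsimp hcl i; split; [split|].
- by exists 1 => y hy; exact: phat_norm.
- exact: phat_unbiased.
- move=> U hb hu; apply: unique_main => //.
  exact: leq_trans hk.
Qed.
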